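(* Let $p$ be a prime number and let $a$ be an integer not divisible by $p$. Then for every positive integer $n$, $$\vartheta_p\left(\sum_{k=1}^{n}\left(\frac{1}{a^k}+\frac{1}{(p-a)^k}\right)\frac{p^k}{k}\right) \geq (n+1) - \log_p\left(\frac{n+1}{2}\right).$$ Moreover, this inequality is an equality if and only if $n = 2p^{\alpha}-1$ for some non-negative integer $\alpha$.
   Context: For a prime $p$ and a nonzero rational $r$, $\vartheta_p(r)$ denotes the $p$-adic valuation of $r$. For a positive real $x$, $\log_p(x) = \frac{\log x}{\log p}$ is the logarithm to base $p$. *)

(* Defs.v *)
From HB Require Import structures.
From mathcomp Require Import all_boot all_order all_algebra.
From mathcomp Require Import all_classical all_reals all_analysis.
Set Implicit Arguments. Unset Strict Implicit. Unset Printing Implicit Defensive.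
Import Order.TTheory GRing.Theory Num.Theory.
Local Open Scope ring_scope.

(** p-adic valuation of a nonzero rational r = numq r / denq r
    (denq r > 0, coprime): logn p |numq r| - logn p (denq r).
    Only meaningful for r != 0; the statement guards with r != 0. *)
Definition vp (p : nat) (r : rat) : int :=
  (logn p `|numq r|%N)%:Z - (logn p `|denq r|%N)%:Z.

Definition logb {R : realType} (p : nat) (x : R) : R := ln x / ln (p%:R).

Definition Ssum (p : nat) (a : int) (n : nat) : rat :=
  \sum_(1 <= k < n.+1)
     ((a%:~R ^- k + (p%:Z - a)%:~R ^- k) * (p%:R ^+ k) / k%:R).

(* Main.v *)
Require Import Defs.
From HB Require Import structures.
From mathcomp Require Import all_boot all_order all_algebra.
From mathcomp Require Import all_classical all_reals all_analysis.
Import Order.TTheory GRing.Theory Num.Theory.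
Local Open Scope ring_scope.
From mathcomp Require Import zify ring lra.
Set Implicit Arguments. Unset Strict Implicit. Unset Printing Implicit Defensive.

Section Val.
Variable p : nat.
Hypothesis pp : prime p.

Lemma ndvd_neq0 (u : int) : ~~ (p%:Z %| u)%Z -> u != 0.
Proof. by apply: contraNneq => ->; rewrite dvdz0. Qed.

Lemma ndvdM (u w : int) : ~~ (p%:Z %| u)%Z -> ~~ (p%:Z %| w)%Z -> ~~ (p%:Z %| u * w)%Z.
Proof. rewrite !dvdzE abszM /= Euclid_dvdM //; by move=> /negbTE-> /negbTE->. Qed.

Lemma ndvdX (u : int) k : ~~ (p%:Z %| u)%Z -> ~~ (p%:Z %| u ^+ k)%Z.
Proof. rewrite !dvdzE abszX /= Euclid_dvdX //; by move=> /negbTE->. Qed.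

Lemma ndvd_nat (m : nat) : coprime p m -> ~~ (p%:Z %| m%:Z)%Z.
Proof. by rewrite dvdzE /= prime_coprime. Qed.

Lemma int_factor (u : int) : u != 0 ->
  exists l (u' : int), ~~ (p%:Z %| u')%Z /\ u = (p%:Z) ^+ l * u'.
Proof.
move=> u0; have ugt: (0 < `|u|)%N by rewrite absz_gt0.
have [m cm hm] := pfactor_coprime pp ugt.
set l := logn p `|u| in hm *.
exists l, ((-1) ^+ (u < 0)%R * m%:Z); split.
  by rewrite dvdzE abszMsign /= -prime_coprime.
rewrite {1}[u]intEsign hm -natz natrM natrX !natz; ring.
Qed.

Lemma vp_frac (x : rat) (U W : int) : U != 0 -> W != 0 -> x = U%:~R / W%:~R ->
  (logn p `|numq x| + logn p `|W| = logn p `|U| + logn p `|denq x|)%N.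
Proof.
move=> U0 W0 hx.
have aN : (0 < `|numq x|)%N.
  by rewrite absz_gt0 numq_eq0 hx mulf_neq0 ?invr_eq0 ?intr_eq0.
have aD : (0 < `|denq x|)%N by rewrite absz_gt0 denq_neq0.
have := divq_num_den x; rewrite [in RHS]hx => /eqP.
rewrite eqr_div ?intr_eq0 ?denq_neq0 // -!intrM => /eqP /intr_inj /(congr1 absz).
rewrite !abszM => /(congr1 (logn p)).
have nN : numq x != 0 by rewrite -absz_gt0.
by rewrite !lognM ?absz_gt0 ?denq_neq0.
Qed.

Lemma vpC (e1 e2 : nat) (u w : int) : ~~ (p%:Z %| u)%Z -> ~~ (p%:Z %| w)%Z ->
  vp p ((p%:R ^+ e1 * u%:~R) / (p%:R ^+ e2 * w%:~R)) = e1%:Z - e2%:Z.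
Proof.
move=> hu hw.
have u0 := ndvd_neq0 hu; have w0 := ndvd_neq0 hw.
have pn0 : (p%:Z) != 0 by rewrite -lt0n prime_gt0.
have W0 : (p%:Z ^+ e2 * w) != 0 by rewrite mulf_neq0 // expf_neq0.
have U0 : (p%:Z ^+ e1 * u) != 0 by rewrite mulf_neq0 // expf_neq0.
have := @vp_frac ((p%:R ^+ e1 * u%:~R) / (p%:R ^+ e2 * w%:~R)) _ _ U0 W0 (ltac:(by rewrite !rmorphM !rmorphXn)).
rewrite !abszM !abszX /= !lognM ?absz_gt0 ?expn_gt0 ?prime_gt0 //.
have lu : logn p `|u| = 0%N by rewrite logn_coprime // (prime_coprime _ pp); move: hu; rewrite dvdzE.
have lw : logn p `|w| = 0%N by rewrite logn_coprime // (prime_coprime _ pp); move: hw; rewrite dvdzE.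
rewrite !pfactorK // lu lw /vp => h.
lia.
Qed.

Lemma vpE (x : rat) : x != 0 -> exists e1 e2 (u w : int),
  [/\ ~~ (p%:Z %| u)%Z, ~~ (p%:Z %| w)%Z &
      x = (p%:R ^+ e1 * u%:~R) / (p%:R ^+ e2 * w%:~R)].
Proof.
move=> x0.
have [l1 [u [hu eu]]] := @int_factor (numq x) (ltac:(by rewrite numq_eq0)).
have [l2 [w [hw ew]]] := @int_factor (denq x) (denq_neq0 x).
exists l1, l2, u, w; split => //.
by rewrite -[LHS]divq_num_den eu ew !rmorphM !rmorphXn.
Qed.

Definition vge (c : nat) (x : rat) :=
  exists u w : int, ~~ (p%:Z %| w)%Z /\ x = p%:R ^+ c * u%:~R / w%:~R.

Lemma vge0 c : vge c 0.
Proof.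
exists 0, 1; split; last by rewrite mulr0 mul0r.
rewrite dvdzE /= dvdn1; have := prime_gt1 pp; lia.
Qed.



Lemma vge_add c x y : vge c x -> vge c y -> vge c (x + y).
Proof.
move=> [u1 [w1 [h1 ->]]] [u2 [w2 [h2 ->]]].
exists (u1 * w2 + u2 * w1), (w1 * w2); split; first exact: ndvdM.
rewrite rmorphD !rmorphM /=; field.
by rewrite !intr_eq0 !ndvd_neq0.
Qed.

Lemma vge_sum c (I : Type) (r : seq I) (P : pred I) (F : I -> rat) :
  (forall i, P i -> vge c (F i)) -> vge c (\sum_(i <- r | P i) F i).
Proof.
move=> h; apply: (big_ind (vge c)); [exact: vge0 | exact: vge_add | exact: h].
Qed.

Lemma vge_le c c' x : (c' <= c)%N -> vge c x -> vge c' x.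
Proof.
move=> le [u [w [hw ->]]]; exists (p%:Z ^+ (c - c') * u), w; split => //.
rewrite rmorphM rmorphXn /= mulrA -exprD subnKC //.
Qed.

Lemma vge_vp c x : x != 0 -> vge c x -> c%:Z <= vp p x.
Proof.
move=> x0 [u [w [hw ex]]].
have u0 : u != 0 by apply: contra_neq x0 => u0; rewrite ex u0 mulr0 mul0r.
have [l [u' [hu' eu]]] := int_factor u0.
have : x = (p%:R ^+ (c + l) * u'%:~R) / (p%:R ^+ 0 * w%:~R).
  by rewrite ex eu rmorphM rmorphXn /= expr0 mul1r exprD mulrA.
move=> ->; rewrite vpC //; lia.
Qed.

Lemma vp_vge (c : nat) x : x != 0 -> c%:Z <= vp p x -> vge c x.
Proof.
move=> x0; have [e1 [e2 [u [w [hu hw ex]]]]] := vpE x0.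
rewrite ex vpC // => le.
have e : e1 = (c + (e1 - c - e2) + e2)%N by lia.
exists (p%:Z ^+ (e1 - c - e2) * u), w; split => //.
have pn0 : (p%:R : rat) != 0 by rewrite pnatr_eq0 -lt0n prime_gt0.
rewrite rmorphM rmorphXn /= {1}e !exprD; field.
by rewrite !intr_eq0 !ndvd_neq0 ?expf_neq0.
Qed.

Lemma vp_exact (e : nat) (u w : int) y : ~~ (p%:Z %| u)%Z -> ~~ (p%:Z %| w)%Z ->
  vge e.+1 y ->
  let z := p%:R ^+ e * u%:~R / w%:~R + y in z != 0 /\ vp p z = e%:Z.
Proof.
move=> hu hw [u2 [w2 [hw2 ->]]] z.
have hU : ~~ (p%:Z %| u * w2 + p%:Z * u2 * w)%Z.
  apply: contra (ndvdM hu hw2) => h.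
  have : (p%:Z %| p%:Z * u2 * w)%Z by rewrite -mulrA dvdz_mulr.
  by move=> h2; rewrite -(addrK (p%:Z * u2 * w) (u * w2)) rpredB.
have hW := ndvdM hw hw2.
have ez : z = (p%:R ^+ e * (u * w2 + p%:Z * u2 * w)%:~R) / (p%:R ^+ 0 * (w * w2)%:~R).
  rewrite /z !rmorphD !rmorphM /= exprS expr0; field.
  by rewrite !intr_eq0 (ndvd_neq0 hw) (ndvd_neq0 hw2).
split; first last.
  rewrite ez vpC //; lia.
have pn0 : (p%:R : rat) != 0 by rewrite pnatr_eq0 -lt0n prime_gt0.
rewrite ez expr0 mul1r mulf_neq0 ?invr_eq0 ?intr_eq0 ?(ndvd_neq0 hU) ?(ndvd_neq0 hW) //.
by rewrite mulf_neq0 ?expf_neq0 // intr_eq0 (ndvd_neq0 hU).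
Qed.

End Val.
Definition W (t : rat) k := \sum_(j < k.+1) (-1) ^+ j * ('C(k - j, j))%:R * t ^+ (k - j).

Lemma W_rec t k : W t k.+2 = t * W t k.+1 - t * W t k.
Proof.
rewrite /W big_ord_recl big_ord_recr /= [in t * _ - _]big_ord_recl /=.
rewrite subn0 bin0 subnn bin0n mulr0 mul0r addr0 expr0 mul1r.
rewrite mulrDr !mulr_sumr -addrA -sumrB exprS; congr (_ + _).
  by rewrite subn0 mul1r mul1r.
apply: eq_bigr => i _ /=.
have hi : (k.+2 - bump 0 i = (k - i).+1)%N by rewrite /bump /=; have := ltn_ord i; lia.
have hi2 : (k.+1 - bump 0 i = (k - i))%N by rewrite /bump /=; have := ltn_ord i; lia.
rewrite hi hi2 binS natrD /bump /= add1n !exprS; ring.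
Qed.

Lemma W0 t : W t 0 = 1.
Proof. by rewrite /W big_ord_recl big_ord0 /= addr0 expr0 mulr1 mul1r. Qed.
Lemma W1 t : W t 1 = t.
Proof. rewrite /W !big_ord_recl big_ord0 /= addr0 /bump /=.
by rewrite !subn0 bin0 expr0 expr1 !mul1r. Qed.

Lemma P_eq (x y : rat) n : x + y = x * y -> (0 < n)%N ->
  x ^+ n + y ^+ n = 2 * W (x * y) n - (x * y) * W (x * y) n.-1.
Proof.
move=> hxy; set t := x * y.
suff H : forall k, x ^+ k.+1 + y ^+ k.+1 = 2 * W t k.+1 - t * W t k /\
                   x ^+ k.+2 + y ^+ k.+2 = 2 * W t k.+2 - t * W t k.+1.
  by case: n => // n _; case: (H n).
elim => [|k [IH1 IH2]].
  rewrite W_rec W1 W0 !expr1 hxy; split; first by rewrite /t; ring.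
  have -> : x ^+ 2 + y ^+ 2 = (x + y) ^+ 2 - 2 * (x * y) by ring.
  by rewrite hxy /t; ring.
split => //.
have -> : x ^+ k.+3 + y ^+ k.+3 = (x + y) * (x ^+ k.+2 + y ^+ k.+2) - x * y * (x ^+ k.+1 + y ^+ k.+1).
  by rewrite !exprS; ring.
rewrite hxy -/t IH1 IH2 (W_rec t k.+1) (W_rec t k) /t; ring.
Qed.

Definition D (t : rat) k :=
  \sum_(j < k) (-1) ^+ j * ('C(k - j, j))%:R * t ^+ (k - j) / (k - j)%:R.

Lemma D_eq t k : k.+1%:R * D t k.+1 = 2 * W t k.+1 - t * W t k.
Proof.
rewrite /D /W (big_ord_recr k.+1) /= subnn bin0n mulr0 mul0r addr0.
rewrite mulr_sumr [2 * _]mulr_sumr [t * _]mulr_sumr -sumrB; apply: eq_bigr => j _.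
have hj := ltn_ord j.
have -> : (k.+1 - j = (k - j).+1)%N by lia.
set m := (k - j)%N.
have hk : (k.+1 = m.+1 + j)%N by rewrite /m; lia.
have -> : (k.+1%:R : rat) = m.+1%:R + j%:R by rewrite -natrD -hk.
rewrite exprS.
have M0 : (m.+1%:R : rat) != 0 by rewrite pnatr_eq0.
case: (leqP j m.+1) => hjm.
  have h := mul_bin_down m.+1 j.
  have h' : (m.+1%:R * ('C(m, j))%:R : rat) = (m.+1%:R - j%:R) * ('C(m.+1, j))%:R.
    by rewrite -natrB // -!natrM h.
  have -> : (('C(m, j))%:R : rat) = (m.+1%:R - j%:R) * ('C(m.+1, j))%:R / m.+1%:R.
    by rewrite -h'; field.
  by field.
rewrite !bin_small //; last by lia.
ring.
Qed.

Definition Aint n m : int := \sum_(j < (n - m).+1) (-1) ^+ j * ('C(m, j))%:R.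
Definition T (t : rat) n := \sum_(i < n) (Aint n i.+1)%:~R * t ^+ i.+1 / i.+1%:R.

Lemma T_step t n : T t n.+1 = T t n + D t n.+1.
Proof.
rewrite /T /D [X in _ = _ + X](reindex_inj rev_ord_inj) /= !big_ord_recr /=.
rewrite addrA -big_split /=; congr (_ + _).
  apply: eq_bigr => i _.
  have hi := ltn_ord i.
  have e1 : (n.+1 - (n.+1 - i.+1) = i.+1)%N by lia.
  rewrite e1 subSS /Aint.
  have -> : ((n - i.+1).+1 = n - i)%N by lia.
  rewrite big_ord_recr /= rmorphD /=.
  rewrite !subSS rmorphM rmorphXn /= rmorphN1 rmorph_nat.
  by rewrite mulrDl mulrDl.
rewrite /Aint subnn big_ord1 expr0 mul1r bin0 rmorph1 mul1r.
by rewrite subn0.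
Qed.


Lemma S_T (p : nat) (a : int) n : a != 0 -> (p%:Z - a) != 0 ->
  Ssum p a n = T ((p%:R / a%:~R) * (p%:R / (p%:Z - a)%:~R)) n.
Proof.
move=> a0 b0.
set x := p%:R / a%:~R; set y := p%:R / (p%:Z - a)%:~R.
have a0' : (a%:~R : rat) != 0 by rewrite intr_eq0.
have b0' : ((p%:Z - a)%:~R : rat) != 0 by rewrite intr_eq0.
have hxy : x + y = x * y.
  rewrite /x /y; move: b0'; rewrite rmorphB /= => b0'.
  have -> : ((p%:Z)%:~R : rat) = p%:R by [].
  move: b0'; have -> : ((p%:Z)%:~R : rat) = p%:R by [].
  move=> b0'; field; by rewrite a0' b0'.
elim: n => [|n IH].
  by rewrite /Ssum /T big_ord0 big_geq.
rewrite /Ssum big_nat_recr //= -/(Ssum p a n) IH T_step; congr (_ + _).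
have k0 : (n.+1%:R : rat) != 0 by rewrite pnatr_eq0.
have -> : (a%:~R ^- n.+1 + (p%:Z - a)%:~R ^- n.+1) * p%:R ^+ n.+1 = x ^+ n.+1 + y ^+ n.+1.
  by rewrite /x /y !exprMn !exprVn mulrDl mulrC [X in _ + X]mulrC.
rewrite P_eq // -D_eq /=; field; done.
Qed.

Lemma alt_full m : (0 < m)%N -> \sum_(j < m.+1) (-1) ^+ j * ('C(m, j))%:R = 0 :> int.
Proof.
move=> m0; have := exprD1n (-1 : int) m; rewrite addNr expr0n eqn0Ngt m0 /=.
move=> /esym h; rewrite -[RHS]h; apply: eq_bigr => j _; by rewrite mulr_natr.
Qed.

Lemma A_zero n m : (0 < m)%N -> (2 * m <= n)%N -> Aint n m = 0.
Proof.
move=> m0 le; rewrite /Aint (bigID (fun j : 'I_ _ => (j < m.+1)%N)) /=.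
rewrite [X in _ + X]big1 ?addr0; last first.
  by move=> j hj; rewrite bin_small ?mulr0 // ltnNge -ltnS.
rewrite -(big_ord_widen _ (fun j => (-1) ^+ j * ('C(m, j))%:R)) ?alt_full //.
lia.
Qed.

Lemma A_edge m : (0 < m)%N -> Aint (2 * m).-1 m = - (-1) ^+ m.
Proof.
move=> m0; rewrite /Aint.
have -> : (((2 * m).-1 - m).+1 = m)%N by lia.
have := alt_full m0; rewrite big_ord_recr /= binn mulr1 => /eqP.
by rewrite addr_eq0 => /eqP.
Qed.

Lemma logn_lt p m : prime p -> (0 < m)%N -> (logn p m < m)%N.
Proof.
move=> pp m0; have h1 := dvdn_leq m0 (pfactor_dvdnn p m).
have h2 := ltn_expl (logn p m) (prime_gt1 pp); lia.
Qed.

Lemma term_form (p : nat) (a b : int) n m : prime p -> ~~ (p%:Z %| a)%Z -> ~~ (p%:Z %| b)%Z ->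
  (0 < m)%N -> exists m' : nat, [/\ coprime p m', (m = m' * p ^ logn p m)%N &
  ((Aint n m)%:~R * ((p%:R / a%:~R) * (p%:R / b%:~R)) ^+ m / m%:R : rat) =
  p%:R ^+ (2 * m - logn p m) * (Aint n m)%:~R / ((a * b) ^+ m * m'%:Z)%:~R].
Proof.
move=> pp ha hb m0.
have [m' cm hm] := pfactor_coprime pp m0.
have hl := logn_lt pp m0.
exists m'; split => //.
set l := logn p m in hm hl *.
have a0 : (a%:~R : rat) != 0 by rewrite intr_eq0 (ndvd_neq0 ha).
have b0 : (b%:~R : rat) != 0 by rewrite intr_eq0 (ndvd_neq0 hb).
have m'0 : (m'%:R : rat) != 0.
  by rewrite pnatr_eq0; apply: contraTneq cm => ->; rewrite /coprime gcdn0; have := prime_gt1 pp; lia.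
have pn0 : (p%:R : rat) != 0 by rewrite pnatr_eq0 -lt0n prime_gt0.
have e : (2 * m = (2 * m - l) + l)%N by lia.
have mE : (m%:R : rat) = m'%:R * p%:R ^+ l by rewrite {1}hm natrM natrX.
rewrite mE rmorphM rmorphXn rmorphM /=.
have -> : ((m'%:Z)%:~R : rat) = m'%:R by [].
rewrite !exprMn !exprVn.
have pe : (p%:R : rat) ^+ m * p%:R ^+ m = p%:R ^+ (2 * m - l) * p%:R ^+ l.
  by rewrite -!exprD -e; congr (_ ^+ _); lia.
have -> : (p%:R : rat) ^+ (2 * m - l) = p%:R ^+ m * p%:R ^+ m / p%:R ^+ l.
  by rewrite pe mulfK // expf_neq0.
field.
by rewrite m'0 !expf_neq0.
Qed.

Lemma term_vge (p : nat) (a b : int) n m : prime p -> ~~ (p%:Z %| a)%Z -> ~~ (p%:Z %| b)%Z ->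
  (0 < m)%N ->
  vge p (2 * m - logn p m) ((Aint n m)%:~R * ((p%:R / a%:~R) * (p%:R / b%:~R)) ^+ m / m%:R).
Proof.
move=> pp ha hb m0; have [m' [cm _ ->]] := term_form n pp ha hb m0.
exists (Aint n m), ((a * b) ^+ m * m'%:Z); split => //.
exact: ndvdM (ndvdX pp _ (ndvdM pp ha hb)) (ndvd_nat pp cm).
Qed.

Lemma RL (R : realType) (p n m : nat) : prime p -> (0 < n)%N -> (n.+1 <= 2 * m)%N ->
  (n.+1%:R - logb p (n.+1%:R / 2 : R) <= (2 * m - logn p m)%:R) /\
  ((2 * m - logn p m)%:R = n.+1%:R - logb p (n.+1%:R / 2 : R) ->
     (n.+1 = 2 * m)%N /\ (m = p ^ logn p m)%N).
Proof.
move=> pp n0 nm.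
have m0 : (0 < m)%N by lia.
set l := logn p m; set d := (2 * m - n.+1)%N.
have hl := logn_lt pp m0.
have h1 : (p ^ l <= m)%N := dvdn_leq m0 (pfactor_dvdnn p m).
have h2 := ltn_expl d (prime_gt1 pp).
have h3 : (n.+1 + d <= n.+1 * p ^ d)%N by nia.
have p1 : (1 < p%:R :> R) by rewrite ltr1n prime_gt1.
have lnp : 0 < ln (p%:R : R) by apply: ln_gt0.
set A := ln (n.+1%:R / 2 : R).
have LA : logb p (n.+1%:R / 2 : R) * ln (p%:R : R) = A.
  by rewrite /logb divfK // gt_eqF.
have pos2 : (0 : R) < n.+1%:R / 2 by rewrite divr_gt0 // ltr0n.
have ppos : (0 : R) < p%:R by lra.
have lnX : ln ((p ^ l)%:R : R) = l%:R * ln (p%:R : R).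
  by rewrite natrX lnXn // mulr_natl.
have lnY : ln (n.+1%:R / 2 * (p ^ d)%:R : R) = A + d%:R * ln (p%:R : R).
  by rewrite lnM ?posrE ?natrX ?exprn_gt0 // lnXn // [d%:R * _]mulr_natl.
have XY : ((p ^ l)%:R : R) <= n.+1%:R / 2 * (p ^ d)%:R.
  have : ((2 * p ^ l)%:R : R) <= (n.+1 * p ^ d)%:R by rewrite ler_nat; lia.
  rewrite !natrM => h; rewrite mulrAC ler_pdivlMr //; lra.
have Xpos : (0 : R) < (p ^ l)%:R by rewrite ltr0n expn_gt0 prime_gt0.
have Ypos : (0 : R) < n.+1%:R / 2 * (p ^ d)%:R by rewrite mulr_gt0 // ltr0n expn_gt0 prime_gt0.
have lnXY : l%:R * ln (p%:R : R) <= A + d%:R * ln (p%:R : R).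
  by rewrite -lnX -lnY ler_ln ?posrE.
have e2m : ((2 * m - l)%:R : R) = n.+1%:R + d%:R - l%:R.
  by rewrite -natrD -natrB; [congr (_%:R); lia | lia].
rewrite e2m; set L := logb p _ in LA *.
split; first by nra.
move=> eq.
have : ln ((p ^ l)%:R : R) = ln (n.+1%:R / 2 * (p ^ d)%:R : R).
  rewrite lnX lnY; nra.
move=> e0.
have h0 : ((p ^ l)%:R : R) = n.+1%:R / 2 * (p ^ d)%:R.
  by apply: ln_inj => //; rewrite posrE.
have : ((2 * p ^ l)%:R : R) = (n.+1 * p ^ d)%:R.
  rewrite natrM h0 [RHS]natrM; field.
  by [].
move/eqP; rewrite eqr_nat => /eqP h.
have ed : d = (2 * m - n.+1)%N by [].
clearbody d; set P := (p ^ d)%N in h h2 h3.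
have hd : (n * d <= 0)%N by nia.
split; nia.
Qed.


Lemma aux_i (n i m0 : nat) : n.+1 = (2 * i.+1)%N -> n = (2 * m0).-1 -> (0 < m0)%N -> i = m0.-1.
Proof. lia. Qed.

Unset Implicit Arguments.

Theorem theorem1 (R : realType) (p : nat) (a : int) :
  prime p -> ~~ (p%:Z %| a)%Z ->
  forall n : nat, (0 < n)%N ->
    (Ssum p a n != 0 ->
       (n.+1%:R - logb p (n.+1%:R / 2 : R) <= (vp p (Ssum p a n))%:~R))
    /\
    ((Ssum p a n != 0 /\
        (vp p (Ssum p a n))%:~R = n.+1%:R - logb p (n.+1%:R / 2 : R))
     <-> exists alpha : nat, n = (2 * p ^ alpha).-1).
Proof.
move=> pp ha n n0.
set b := (p%:Z - a).
have hb : ~~ (p%:Z %| b)%Z.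
  apply: contra ha => hb; have -> : a = p%:Z - b by rewrite /b opprB addrC subrK.
  by rewrite rpredB // dvdzz.
have a0 := ndvd_neq0 ha; have b0 := ndvd_neq0 hb.
have ST : Ssum p a n = T (p%:R / a%:~R * (p%:R / b%:~R)) n by rewrite S_T.
set t := (p%:R / a%:~R * (p%:R / b%:~R) : rat) in ST.
set F := fun i : 'I_n => (Aint n i.+1)%:~R * t ^+ i.+1 / i.+1%:R.
have SF : Ssum p a n = \sum_(i < n) F i by rewrite ST.
have Fz : forall i : 'I_n, (2 * i.+1 <= n)%N -> F i = 0.
  by move=> i hi; rewrite /F A_zero // rmorph0 !mul0r.
have Fv : forall i : 'I_n, vge p (2 * i.+1 - logn p i.+1) (F i).
  by move=> i; apply: term_vge.
set B := n.+1%:R - logb p (n.+1%:R / 2 : R).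
have key : Ssum p a n != 0 -> exists i : 'I_n,
    [/\ (n.+1 <= 2 * i.+1)%N, B <= (2 * i.+1 - logn p i.+1)%:R &
        ((2 * i.+1 - logn p i.+1)%:Z <= vp p (Ssum p a n))].
  move=> S0.
  have V0 : 0 <= vp p (Ssum p a n).
    apply: (vge_vp pp (c := 0)) => //; rewrite SF; apply: (vge_sum pp) => i _.
    by apply: vge_le (Fv i).
  move: V0; case E: (vp p (Ssum p a n)) => [v|v] V0; last by [].
  case: (boolP [exists i : 'I_n, (n.+1 <= 2 * i.+1)%N && (2 * i.+1 - logn p i.+1 <= v)%N]).
    move=> /existsP [i /andP [h1 h2]]; exists i; split => //.
    by case: (RL R pp n0 h1).
  move=> /existsPn hall.
  have : vge p v.+1 (Ssum p a n).
    rewrite SF; apply: (vge_sum pp) => i _.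
    case: (leqP (n.+1) (2 * i.+1)) => h.
      apply: vge_le (Fv i); move: (hall i); rewrite h /= -ltnNge; done.
    rewrite Fz; [exact: vge0 | lia].
  move/(vge_vp pp S0); rewrite E; lia.
have toR : forall (k : nat) (z : int), (k%:Z <= z) -> (k%:R : R) <= z%:~R.
  by move=> k z h; rewrite -(ler_int R) in h.
split.
  move=> S0; have [i [h1 h2 h3]] := key S0.
  exact: le_trans h2 (toR _ _ h3).
split.
  move=> [S0 eqV]; have [i [h1 h2 h3]] := key S0.
  have h4 := toR _ _ h3.
  have eq2 : ((2 * i.+1 - logn p i.+1)%:R : R) = B.
    by apply/eqP; rewrite eq_le h2 andbT -eqV.
  have [e1 e2] := (RL R pp n0 h1).2 eq2.
  exists (logn p i.+1); move: e1 e2; set q := (p ^ logn p i.+1)%N; lia.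
move=> [al hn].
set m0 := (p ^ al)%N in hn.
have m00 : (0 < m0)%N by rewrite expn_gt0 prime_gt0.
have lt_al : (al < m0)%N by apply: ltn_expl; exact: prime_gt1.
have hi0 : (m0.-1 < n)%N by lia.
set i0 := Ordinal hi0.
have i0m : (i0.+1 = m0)%N by rewrite /= prednK.
have logm0 : logn p m0 = al by rewrite pfactorK.
have p1 : (1 < p%:R :> R) by rewrite ltr1n prime_gt1.
have lnp : 0 < ln (p%:R : R) by apply: ln_gt0.
have hB : B = (2 * m0 - al)%:R.
  rewrite /B; have -> : (n.+1%:R / 2 : R) = p%:R ^+ al.
    by rewrite hn prednK ?muln_gt0 // natrM natrX; field.
  rewrite /logb lnXn ?(lt_trans ltr01 p1) // -[ln _ *+ al]mulr_natr mulrAC divff ?gt_eqF // mul1r.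
  by rewrite natrB ?hn ?prednK ?muln_gt0 //; lia.
have [m' [cm hm Fe]] := term_form n pp ha hb (ltn0Sn i0).
rewrite i0m logm0 in hm.
have m'1 : m' = 1%N.
  by move: hm; rewrite -{1}(mul1n m0) => /eqP; rewrite eqn_mul2r gtn_eqF // => /eqP.
have Ai0 : Aint n i0.+1 = - (-1) ^+ m0 by rewrite i0m hn A_edge.
have hu : ~~ (p%:Z %| - (-1) ^+ m0)%Z.
  rewrite dvdzE abszN abszX /= exp1n dvdn1; have := prime_gt1 pp; lia.
have hw : ~~ (p%:Z %| (a * b) ^+ i0.+1 * m'%:Z)%Z.
  exact: ndvdM (ndvdX pp _ (ndvdM pp ha hb)) (ndvd_nat pp cm).
have Fi0 : F i0 = p%:R ^+ (2 * m0 - al) * (- (-1) ^+ m0)%:~R / ((a * b) ^+ i0.+1 * m'%:Z)%:~R.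
  by rewrite /F Fe Ai0 i0m logm0.
have rest : vge p (2 * m0 - al).+1 (\sum_(i < n | i != i0) F i).
  apply: (vge_sum pp) => i hi.
  case: (leqP (n.+1) (2 * i.+1)) => h; last by rewrite Fz; [exact: vge0 | rewrite -ltnS].
  apply: vge_le (Fv i).
  have [r1 r2] := RL R pp n0 h.
  have : B < (2 * i.+1 - logn p i.+1)%:R.
    rewrite lt_def r1 andbT; apply/eqP => eq2.
    have [e1 _] := r2 eq2.
    move/negP: hi; apply; apply/eqP/val_inj => /=; exact: aux_i e1 hn m00.
  by rewrite hB ltr_nat.
rewrite SF (bigD1 i0) //= Fi0.
have [z0 vz] := vp_exact pp hu hw rest.
split; first exact: z0.
by rewrite vz hB.
Qed.
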